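(* Let $\mathcal{G}$ be a Hausdorff locally compact étale groupoid and $(x,\chi)\in\mathrm{Char}(\mathcal{G})$. For every $g\in\mathcal{G}^x_x$ choose an open bisection $W_g$ containing $g$. For $\varepsilon>0$, a finite set $F\subset\mathcal{G}^x_x$ and an open neighbourhood $U$ of $x$ in $\mathcal{G}^{(0)}$ with $U\subset\bigcap_{g\in F}r(W_g)$, let $\mathcal{U}^\chi_x(U,\varepsilon,(W_g)_{g\in F})$ be the set of points $(y,\eta)\in\mathrm{Char}(\mathcal{G})$ such that $y\in U$ and for every $g\in F$ either $W_g\cap\mathcal{G}^y_y=\emptyset$, or $W_g\cap\mathcal{G}^y_y=\{h\}$ for some $h$ with $|\chi(g)-\eta(h)|<\varepsilon$. Then these sets (over all such $U,\varepsilon,F$) are open and form a base of open neighbourhoods of $(x,\chi)$ in $\mathrm{Char}(\mathcal{G})$.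
   Context: $\mathcal{G}$ is a Hausdorff locally compact étale groupoid with unit space $\mathcal{G}^{(0)}$, source and range maps $s,r$; $\mathcal{G}_x=s^{-1}(x)$, $\mathcal{G}^x=r^{-1}(x)$, $\mathcal{G}^x_x=\mathcal{G}_x\cap\mathcal{G}^x$. A bisection is a subset on which $s$ and $r$ are injective. The isotropy bundle is $\mathrm{Iso}(\mathcal{G})=\{g\in\mathcal{G}: s(g)=r(g)\}$. $\mathrm{Char}(\mathcal{G})$ is the set of pairs $(x,\chi)$ with $x\in\mathcal{G}^{(0)}$ and $\chi\colon\mathcal{G}^x_x\to\mathbb{T}$ a group homomorphism, equipped with the topology having as a basis the finite intersections of the sets $\mathcal{O}(U,K,V)=\{(x,\chi): x\in U,\ \chi(K\cap\mathcal{G}^x_x)\subset V\}$, where $U\subset\mathcal{G}^{(0)}$ is open, $K\subset\mathrm{Iso}(\mathcal{G})$ is compact and $V\subset\mathbb{T}$ is open. *)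

(* Defs.v *)
From mathcomp Require Import all_boot all_algebra.
From mathcomp Require Import all_classical all_reals all_analysis.
From mathcomp Require Import complex.
Set Implicit Arguments. Unset Strict Implicit. Unset Printing Implicit Defensive.
Import GRing.Theory Num.Theory.
Local Open Scope classical_set_scope.
Local Open Scope ring_scope.

(* A topological groupoid with arrow space G and unit space X.
   Composition convention: [mul g h] is "g h", defined when [src g = rng h]. *)
Record gpd_data (G X : topologicalType) := GpdData {
  src : G -> X;
  rng : G -> X;
  unit : X -> G;
  mul : G -> G -> G;
  inv : G -> G }.

Section Groupoid.
Context {G X : topologicalType} (D : gpd_data G X).
Local Notation s := (src D).
Local Notation r := (rng D).
Local Notation u := (unit D).
Local Notation m := (mul D).
Local Notation i := (inv D).

Definition composable (p : G * G) := s p.1 = r p.2.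

Definition groupoid_axioms : Prop :=
  [/\ (forall x, s (u x) = x /\ r (u x) = x),
      (forall g h, s g = r h -> s (m g h) = s h /\ r (m g h) = r g),
      (forall g h k, s g = r h -> s h = r k -> m (m g h) k = m g (m h k)),
      (forall g, m (u (r g)) g = g /\ m g (u (s g)) = g) &
      (forall g, [/\ s (i g) = r g, r (i g) = s g,
                     m g (i g) = u (r g) & m (i g) g = u (s g)])].

Definition topological_groupoid : Prop :=
  [/\ groupoid_axioms, continuous s, continuous r, continuous u &
      (continuous i /\ {within composable, continuous (fun p : G * G => m p.1 p.2)})].

Definition local_homeo (f : G -> X) : Prop :=
  continuous f /\
  forall g, exists W : set G, [/\ open W, W g, set_inj W f &
     forall O : set G, open O -> O `<=` W -> open (f @` O)].

Definition hlc_etale_groupoid : Prop :=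
  [/\ topological_groupoid, hausdorff_space G, locally_compact [set: G],
      local_homeo r & local_homeo s].

Definition Iso : set G := [set g | s g = r g].
Definition isotropy (x : X) : set G := [set g | s g = x /\ r g = x].

Definition bisection (W : set G) : Prop := set_inj W s /\ set_inj W r.
Definition open_bisection (W : set G) : Prop := open W /\ bisection W.

End Groupoid.

Section Char.
Context {R : realType} {G X : topologicalType} (D : gpd_data G X).

Definition circle : set R[i] := [set z | `|z| = 1].

Definition circle_open (V : set R[i]) : Prop :=
  V `<=` circle /\
  forall v, V v -> exists2 d : R, 0 < d &
    forall w, circle w -> `|w - v| < (d%:C)%C -> V w.

(* chi : G^x_x -> T a group homomorphism, encoded as a function on G which
   is normalised to 1 outside G^x_x (so that characters correspond exactly
   to functions on G^x_x). *)
Definition is_char (x : X) (chi : G -> R[i]) : Prop :=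
  [/\ (forall g, isotropy D x g -> circle (chi g)),
      (forall g h, isotropy D x g -> isotropy D x h ->
          chi (mul D g h) = chi g * chi h) &
      (forall g, ~ isotropy D x g -> chi g = 1)].

Record Char := MkChar { cpt : X; cchar : G -> R[i]; cchar_is_char : is_char cpt cchar }.

Definition basicO (U : set X) (K : set G) (V : set R[i]) : set Char :=
  [set p | U (cpt p) /\ forall g, K g -> isotropy D (cpt p) g -> V (cchar p g)].

Definition basic_triple (b : set X * set G * set R[i]) : Prop :=
  [/\ open b.1.1, compact b.1.2, b.1.2 `<=` Iso D & circle_open b.2].

Definition char_open (A : set Char) : Prop :=
  forall p, A p -> exists bs : seq (set X * set G * set R[i]),
    [/\ (forall b, b \in bs -> basic_triple b),
        (forall b, b \in bs -> basicO b.1.1 b.1.2 b.2 p) &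
        (forall q, (forall b, b \in bs -> basicO b.1.1 b.1.2 b.2 q) -> A q)].

Definition nbhdU (chi : G -> R[i]) (W : G -> set G)
    (U : set X) (eps : R) (F : seq G) : set Char :=
  [set p | U (cpt p) /\
     forall g, g \in F ->
       (W g `&` isotropy D (cpt p) = set0) \/
       exists h, W g `&` isotropy D (cpt p) = [set h] /\
                 `|chi g - cchar p h| < (eps%:C)%C].

Definition admissible (x : X) (W : G -> set G)
    (U : set X) (eps : R) (F : seq G) : Prop :=
  [/\ open U, U x, 0 < eps, (forall g, g \in F -> isotropy D x g) &
      U `<=` \bigcap_(g in [set g | g \in F]) (rng D @` W g)].

End Char.
Arguments Char R {G X} D.
Arguments nbhdU {R G X} D chi W U eps F _.
Arguments char_open {R G X} D A.
Arguments basicO {R G X} D U K V _.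

(* Main.v *)
Require Import Defs.
From mathcomp Require Import all_boot all_algebra.
From mathcomp Require Import all_classical all_reals all_analysis.
From mathcomp Require Import complex order.
Import Order.TTheory GRing.Theory Num.Theory.
Local Open Scope classical_set_scope.
Local Open Scope complex_scope.
Local Open Scope ring_scope.

Lemma my_cover (T : topologicalType) (K : set T) (f : T -> set T) :
  compact K -> (forall k, K k -> open (f k) /\ f k k) ->
  exists ks : seq T, (forall k, k \in ks -> K k) /\
    K `<=` [set x | exists2 k, k \in ks & f k x].
Proof.
move=> cK Hf.
pose B := fun L : seq T => [set ks : seq T | {subset L <= ks} /\ (forall k, k \in ks -> K k)].
pose Fb := filter_from [set L : seq T | forall k, k \in L -> K k] B.
have FF : Filter Fb.
  apply: filter_from_filter; first by exists [::].
  move=> L1 L2 H1 H2; exists (L1 ++ L2).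
    by move=> k; rewrite mem_cat => /orP [/H1|/H2].
  move=> ks [sub Kks]; split; split => // k kL; apply: sub; rewrite mem_cat kL ?orbT //.
have := (compact_near_coveringP K).1 cK (seq T) Fb
   (fun ks x => exists2 k, k \in ks & f k x) FF.
case.
  move=> x Kx.
  exists (f x, B [:: x]).
    split => /=.
      by apply: open_nbhs_nbhs; split; [exact: (Hf x Kx).1 | exact: (Hf x Kx).2].
    by exists [:: x] => //; move=> k; rewrite inE => /eqP ->.
  move=> [x' ks] /= [fx' [sub Kks]].
  by exists x => //; apply: sub; rewrite inE.
move=> L DL BL; exists L; split => //.
by apply: BL; split.
Qed.

Section Aux.
Context {G X : topologicalType} {D : gpd_data G X} (HD : hlc_etale_groupoid D).

Lemma gax : groupoid_axioms D.
Proof. by case: HD => -[]. Qed.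

Lemma X_sep {a b : X} : a <> b -> exists A B : set X,
  [/\ open A, open B, A a, B b & forall z, A z -> B z -> False].
Proof.
move=> ab.
have [[Hax _ _ _ _] _ _ cu _] : topological_groupoid D by case: HD.
have hG : hausdorff_space G by case: HD.
move: hG; rewrite open_hausdorff => /(_ (unit D a) (unit D b)) [].
  apply/eqP => e; apply: ab; have := f_equal (src D) e.
  by rewrite (Hax a).1 (Hax b).1.
move=> [A B] /= [ua ub] [oA oB AB0].
exists (unit D @^-1` A), (unit D @^-1` B); split.
- by apply: open_comp => // z _; apply: cu.
- by apply: open_comp => // z _; apply: cu.
- by move: ua; rewrite inE.
- by move: ub; rewrite inE.
- move=> z Az Bz; move/eqP: AB0 => AB0.
  have : (A `&` B) (unit D z) by [].
  by rewrite AB0.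
Qed.

Lemma r_open (O : set G) : open O -> open (rng D @` O).
Proof.
move=> oO.
have [_ lr] : local_homeo (rng D) by case: HD.
rewrite openE => _ [g Og <-].
have [V [oV Vg _ ropen]] := lr g.
rewrite /interior nbhsE; exists (rng D @` (O `&` V)).
  split; first by apply: ropen; [exact: openI | move=> z []].
  by exists g.
by move=> _ [z [Oz _] <-]; exists z.
Qed.

Lemma s_cont : continuous (src D).
Proof. by case: HD => -[]. Qed.
Lemma r_cont : continuous (rng D).
Proof. by case: HD => -[]. Qed.

Lemma Iso_closed : closed (Iso D).
Proof.
rewrite -openC openE => g ng.
have [A [B [oA oB Ag Bg AB]]] := X_sep ng.
rewrite /interior nbhsE; exists (src D @^-1` A `&` rng D @^-1` B).
  split; last by [].
  apply: openI; apply: open_comp => //.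
  - by move=> z _; apply: s_cont.
  - by move=> z _; apply: r_cont.
by move=> z [Az Bz] e; apply: (AB (src D z)) => //; rewrite e.
Qed.

Lemma cpt_nbhd (h : G) (W : set G) : open W -> W h ->
  exists C O : set G, [/\ compact C, open O, O h, O `<=` C & C `<=` W].
Proof.
move=> oW Wh.
have hG : hausdorff_space G by case: HD.
have lG : locally_compact [set: G] by case: HD.
have [U] := lG h I; rewrite withinET => Uh [cU clU].
have reg := compact_regular hG cU Uh.
have [N Nh clNW] := reg W (open_nbhs_nbhs (conj oW Wh)).
exists (closure (N `&` U)), (N `&` U)°; split.
- apply: (subclosed_compact _ cU); first exact: closed_closure.
  apply: subset_trans (closureS (@subIsetr _ N U)) _; exact: clU.
- exact: open_interior.
- exact: filterI.
- move=> z /interior_subset; exact: subset_closure.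
- apply: subset_trans (closureS (@subIsetl _ N U)) _; exact: clNW.
Qed.
End Aux.

Section Cplx.
Context {R : realType}.

Lemma normC_real (z : R[i]) : `|z| = (complex.Re `|z|)%:C.
Proof. by rewrite RRe_real // normr_real. Qed.

Lemma ltC_le (z : R[i]) (a b : R) : z < a%:C -> a <= b -> z < b%:C.
Proof. by move=> za ab; apply: lt_le_trans za _; rewrite lecR. Qed.

Lemma circle_ball (c : R[i]) (e : R) :
  circle_open [set w | circle w /\ `|c - w| < e%:C].
Proof.
split; first by move=> w [].
move=> v [cv hv]; exists (e - complex.Re `|c - v|).
  by rewrite subr_gt0 -ltcR -normC_real.
move=> w cw hw; split => //.
apply: le_lt_trans (ler_distD v c w) _.
rewrite [X in X + _ < _]normC_real distrC.
have -> : e%:C = (complex.Re `|c - v|)%:C + (e - complex.Re `|c - v|)%:C.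
  by rewrite -rmorphD /= addrC subrK.
by rewrite ltrD2l.
Qed.
End Cplx.

Section Main.
Context {R : realType} {G X : topologicalType} (D : gpd_data G X)
  (HD : hlc_etale_groupoid D).

Definition cond (c : R[i]) (Wg : set G) (e : R) (q : Char R D) : Prop :=
  (Wg `&` isotropy D (cpt q) = set0) \/
  exists h, Wg `&` isotropy D (cpt q) = [set h] /\ `|c - cchar q h| < e%:C.

Lemma bis_single (B : set G) y h : bisection D B -> B h -> isotropy D y h ->
  B `&` isotropy D y = [set h].
Proof.
move=> [sinj _] Bh [sh rh]; apply/seteqP; split => [z [Bz [sz rz]]|z ->] //=.
by apply: sinj; rewrite ?inE //; rewrite sz sh.
Qed.

Lemma char_circle (q : Char R D) g : isotropy D (cpt q) g -> circle (cchar q g).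
Proof. by case: (cchar_is_char q) => + _ _; apply. Qed.

Lemma part1_single (c : R[i]) (Wg : set G) (e : R) (q : Char R D) :
  open_bisection D Wg -> (rng D @` Wg) (cpt q) -> cond c Wg e q ->
  exists b, [/\ basic_triple D b, basicO D b.1.1 b.1.2 b.2 q &
    forall q', basicO D b.1.1 b.1.2 b.2 q' -> cond c Wg e q'].
Proof.
move=> [oW [sinj rinj]] [k Wk rk] [H0 | [h [Hh lt]]].
- have nk : src D k <> rng D k.
    move=> e'; have : (Wg `&` isotropy D (cpt q)) k.
      by split => //; split; rewrite ?e' rk.
    by rewrite H0.
  have [A [B [oA oB Ak Bk AB]]] := X_sep HD nk.
  exists (rng D @` (Wg `&` (src D @^-1` A `&` rng D @^-1` B)), set0, circle);
    split.
  + split => /=.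
    * apply: (r_open HD); apply: openI => //; apply: openI; apply: open_comp => //.
      - by move=> z _; apply: (s_cont HD).
      - by move=> z _; apply: (r_cont HD).
    * exact: compact0.
    * by [].
    * by split => // v _; exists 1 => // w cw _.
  + by split => /=; [rewrite -rk; exists k | by []].
  + move=> q' [[k' [Wk' [Ak' Bk']] rk'] _]; left.
    apply/seteqP; split => // z [Wz [sz rz]].
    have zk : z = k' by apply: rinj; rewrite ?inE //; rewrite rz rk'.
    subst z; apply: (AB (src D k')) => //; rewrite sz -rk' //.
- have : (Wg `&` isotropy D (cpt q)) h by rewrite Hh.
  move=> [Wh isoh].
  have [Cc [Op [cC oO Oh OC CW]]] := cpt_nbhd HD h Wg oW Wh.
  exists (rng D @` Op, Cc `&` Iso D, [set w | circle w /\ `|c - w| < e%:C]);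
    split.
  + split => /=.
    * exact: (r_open HD).
    * exact: compact_closedI cC (Iso_closed HD).
    * by move=> z [].
    * exact: circle_ball.
  + split => /=; first by exists h => //; case: isoh.
    move=> g [Cg _] isog.
    have : (Wg `&` isotropy D (cpt q)) g by split => //; apply: CW.
    by rewrite Hh => ->; split => //; apply: char_circle.
  + move=> q' [[k' Ok' rk'] Hq'].
    have [[z Hz]|nz] := pselect (exists z, (Wg `&` isotropy D (cpt q')) z);
      last first.
      left; apply/seteqP; split => // z Hz; exfalso; apply: nz; by exists z.
    right; exists z; split.
      by case: Hz => Wz isoz; apply: bis_single => //.
    case: Hz => Wz [sz rz].
    have zk : z = k' by apply: rinj; rewrite ?inE //; [apply: CW; apply: OC|rewrite rz rk'].
    subst z; have := Hq' k' _ (conj sz rz); case.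
      by split; [apply: OC | rewrite /Iso /= sz rz].
    by [].
Qed.

Lemma seq_choice {T : eqType} (F : seq G) (P : T -> Prop) (Q : G -> T -> Prop) :
  (forall g, g \in F -> exists b, P b /\ Q g b) ->
  exists bs : seq T, (forall b, b \in bs -> P b) /\
    (forall g, g \in F -> exists2 b, b \in bs & Q g b).
Proof.
elim: F => [|g F IH] H; first by exists [::]; split.
have [b [Pb Qb]] := H g (mem_head _ _).
have [|bs [P' Q']] := IH.
  by move=> g' g'F; apply: H; rewrite in_cons g'F orbT.
exists (b :: bs); split.
  by move=> b'; rewrite in_cons => /orP [/eqP -> | /P'].
move=> g'; rewrite in_cons => /orP [/eqP -> | /Q' [b' b'bs Qb']].
  by exists b => //; exact: mem_head.
by exists b' => //; rewrite in_cons b'bs orbT.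
Qed.

Lemma part1 (p : Char R D) (W : G -> set G)
  (HW : forall g, isotropy D (cpt p) g -> open_bisection D (W g) /\ W g g)
  U (eps : R) F : admissible D (cpt p) W U eps F ->
  char_open D (nbhdU D (cchar p) W U eps F).
Proof.
move=> [oU Ux e0 FI UW] q [Uq Hq].
have [|bs [P' Q']] := @seq_choice _ F
   (fun b => basic_triple D b /\ basicO D b.1.1 b.1.2 b.2 q)
   (fun g b => forall q', basicO D b.1.1 b.1.2 b.2 q' ->
       cond (cchar p g) (W g) eps q').
  move=> g gF.
  have [b [b1 b2 b3]] := part1_single (cchar p g) (W g) eps q
     (HW g (FI g gF)).1 (UW _ Uq g gF) (Hq g gF).
  by exists b.
exists ((U, set0, circle) :: bs); split.
- move=> b; rewrite in_cons => /orP [/eqP -> | /P' []//].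
  split => //=; [exact: compact0 | by split => // v _; exists 1].
- move=> b; rewrite in_cons => /orP [/eqP -> | /P' []//].
  by split.
- move=> q' Hq'; split.
    by have [] := Hq' _ (mem_head _ _).
  move=> g gF; have [b bbs Qb] := Q' g gF; apply: Qb; apply: Hq'.
  by rewrite in_cons bbs orbT.
Qed.

Lemma part2 (p : Char R D) (W : G -> set G)
  (HW : forall g, isotropy D (cpt p) g -> open_bisection D (W g) /\ W g g)
  U (eps : R) F : admissible D (cpt p) W U eps F ->
  nbhdU D (cchar p) W U eps F p.
Proof.
move=> [oU Ux e0 FI UW]; split => // g gF; right; exists g.
have [[_ bis] Wg] := HW g (FI g gF).
split; first exact: (@bis_single _ _ _ bis Wg (FI g gF)).
by rewrite subrr normr0 ltcR.
Qed.

Lemma adm_comb (p : Char R D) (W : G -> set G) U1 e1 F1 U2 e2 F2 :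
  admissible D (cpt p) W U1 e1 F1 -> admissible D (cpt p) W U2 e2 F2 ->
  admissible D (cpt p) W (U1 `&` U2) (Num.min e1 e2) (F1 ++ F2) /\
  nbhdU D (cchar p) W (U1 `&` U2) (Num.min e1 e2) (F1 ++ F2) `<=`
    nbhdU D (cchar p) W U1 e1 F1 `&` nbhdU D (cchar p) W U2 e2 F2.
Proof.
move=> [oU1 U1x e1p F1I U1W] [oU2 U2x e2p F2I U2W]; split.
  split.
  - exact: openI.
  - by split.
  - by rewrite lt_min e1p e2p.
  - by move=> g; rewrite mem_cat => /orP [/F1I | /F2I].
  - move=> y [U1y U2y] g; rewrite /= mem_cat => /orP [gF|gF].
      by apply: (U1W _ U1y).
    by apply: (U2W _ U2y).
move=> q [[U1q U2q] Hq]; split; split => // g gF.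
  have := Hq g; rewrite mem_cat gF => /(_ isT) [->|[h [Hh lt]]]; first by left.
  by right; exists h; split => //; apply: ltC_le lt _; rewrite ge_min lexx.
have := Hq g; rewrite mem_cat gF orbT => /(_ isT) [->|[h [Hh lt]]]; first by left.
by right; exists h; split => //; apply: ltC_le lt _; rewrite ge_min lexx orbT.
Qed.

Definition good (p : Char R D) (W : G -> set G) (V : set R[i]) (O : set G) :=
  exists U e F, admissible D (cpt p) W U e F /\
    forall q, nbhdU D (cchar p) W U e F q ->
      forall g, O g -> isotropy D (cpt q) g -> V (cchar q g).

Lemma adm_triv (p : Char R D) (W : G -> set G) :
  admissible D (cpt p) W setT (1 : R) [::].
Proof. split => //; exact: openT. Qed.

Lemma good_seq (p : Char R D) W V (f : G -> set G) (ks : seq G) :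
  (forall k, k \in ks -> good p W V (f k)) ->
  good p W V [set g | exists2 k, k \in ks & f k g].
Proof.
elim: ks => [|k ks IH] H.
  by exists setT, 1, [::]; split; [exact: adm_triv | move=> q _ g []].
have [|U1 [e1 [F1 [a1 H1]]]] := IH.
  by move=> k' k'ks; apply: H; rewrite in_cons k'ks orbT.
have [U2 [e2 [F2 [a2 H2]]]] := H k (mem_head _ _).
have [a Hs] := @adm_comb p W _ _ _ _ _ _ a1 a2.
exists (U1 `&` U2), (Num.min e1 e2), (F1 ++ F2); split => // q /Hs [n1 n2] g.
move=> [k']; rewrite in_cons => /orP [/eqP -> | k'ks] fg.
  exact: H2.
by apply: H1 => //; exists k'.
Qed.

Lemma part3_single (p : Char R D) (W : G -> set G)
  (HW : forall g, isotropy D (cpt p) g -> open_bisection D (W g) /\ W g g)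
  (b : set X * set G * set R[i]) :
  basic_triple D b -> basicO D b.1.1 b.1.2 b.2 p ->
  exists U e F, admissible D (cpt p) W U e F /\
    nbhdU D (cchar p) W U e F `<=` basicO D b.1.1 b.1.2 b.2.
Proof.
case: b => [[Ub K] V]; rewrite /basic_triple /= => -[oUb cK KI cV] [Ubx HVp].
have spec : forall k, exists O : set G, K k -> [/\ open O, O k & good p W V O].
  move=> k; have [Kk|nKk] := pselect (K k); last by exists set0.
  have [isok|nisok] := pselect (isotropy D (cpt p) k).
    exists (W k) => _; have [[oW bis] Wk] := HW k isok; split => //.
    have [d d0 Hd] := cV.2 _ (HVp k Kk isok).
    exists (rng D @` W k), d, [:: k]; split.
      split.
      - exact: (r_open HD).
      - by exists k => //; case: isok.
      - exact: d0.
      - by move=> g; rewrite inE => /eqP ->.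
      - by move=> y Uy g; rewrite /= inE => /eqP ->.
    move=> q [_ Hq] g Wg isog.
    have Wig : (W k `&` isotropy D (cpt q)) g by split.
    case: (Hq k (mem_head _ _)) => [H0 | [h [Hh lt]]].
      by move: Wig; rewrite H0.
    have gh : g = h by move: Wig; rewrite Hh.
    subst g.
    apply: Hd; first exact: char_circle.
    by rewrite distrC.
  have sk : src D k <> cpt p.
    by move=> e; apply: nisok; split => //; rewrite -(KI k Kk) e.
  have [A [B [oA oB Ak Bx AB]]] := X_sep HD sk.
  exists (src D @^-1` A) => _; split => //.
    by apply: open_comp => // z _; apply: (s_cont HD).
  exists B, 1, [::]; split.
    by split.
  move=> q [Bq _] g Ag [sg rg]; exfalso; apply: (AB (cpt q)) => //.
  by rewrite -sg.
have [f Hf] := choice spec.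
have [ks [ksK Kcov]] := @my_cover G K f cK
   (fun k Kk => let: And3 o fk _ := Hf k Kk in conj o fk).
have [U [e [F [a Hn]]]] := @good_seq p W V f ks
   (fun k kD => let: And3 _ _ gd := Hf k (ksK k kD) in gd).
have [Ub1 [e1 [F1 [a1 H1]]]] : exists U e F, admissible D (cpt p) W U e F /\
    nbhdU D (cchar p) W U e F `<=` [set q | Ub (cpt q)].
  exists Ub, 1, [::]; split; last by move=> q [].
  by split.
have [a2 Hs] := @adm_comb p W _ _ _ _ _ _ a a1.
exists (U `&` Ub1), (Num.min e e1), (F ++ F1); split => // q /Hs [n1 n2].
split; first exact: H1.
move=> g Kg isog; have [k kD fkg] := Kcov g Kg.
by apply: (Hn q n1 g) => //; exists k.
Qed.

Lemma part3 (p : Char R D) (W : G -> set G)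
  (HW : forall g, isotropy D (cpt p) g -> open_bisection D (W g) /\ W g g)
  (A : set (Char R D)) : char_open D A -> A p ->
  exists U (eps : R) F, admissible D (cpt p) W U eps F /\
    nbhdU D (cchar p) W U eps F `<=` A.
Proof.
move=> oA Ap; have [bs [bsT bsp bsA]] := oA p Ap.
suff [U [e [F [a H]]]] : exists U (e : R) F, admissible D (cpt p) W U e F /\
    forall q, nbhdU D (cchar p) W U e F q ->
      forall b, b \in bs -> basicO D b.1.1 b.1.2 b.2 q.
  by exists U, e, F; split => // q /H; exact: bsA.
elim: bs bsT bsp {bsA} => [|b bs IH] bsT bsp.
  by exists setT, 1, [::]; split; [exact: adm_triv | move=> q _ b].
have [|| U1 [e1 [F1 [a1 H1]]]] := IH.
- by move=> b' b'bs; apply: bsT; rewrite in_cons b'bs orbT.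
- by move=> b' b'bs; apply: bsp; rewrite in_cons b'bs orbT.
have [U2 [e2 [F2 [a2 H2]]]] :=
  @part3_single p W HW b (bsT b (mem_head _ _)) (bsp b (mem_head _ _)).
have [a Hs] := @adm_comb p W _ _ _ _ _ _ a1 a2.
exists (U1 `&` U2), (Num.min e1 e2), (F1 ++ F2); split => // q /Hs [n1 n2] b'.
rewrite in_cons => /orP [/eqP -> | b'bs]; first exact: H2.
exact: H1.
Qed.
End Main.

Theorem lemma2p1 (R : realType) (G X : topologicalType) (D : gpd_data G X)
  (HD : hlc_etale_groupoid D) (p : Char R D) (W : G -> set G)
  (HW : forall g, isotropy D (cpt p) g -> open_bisection D (W g) /\ W g g) :
  [/\ (forall U (eps : R) F, admissible D (cpt p) W U eps F ->
         char_open D (nbhdU D (cchar p) W U eps F)),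
      (forall U (eps : R) F, admissible D (cpt p) W U eps F ->
         nbhdU D (cchar p) W U eps F p) &
      (forall A : set (Char R D), char_open D A -> A p ->
         exists U (eps : R) F, admissible D (cpt p) W U eps F /\
           nbhdU D (cchar p) W U eps F `<=` A)].
Proof.
split.
- exact: part1 HD p W HW.
- exact: part2 p W HW.
- exact: part3 HD p W HW.
Qed.
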